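(* Let $H\in\mathbb{R}^{n\times n}$ and $M\in\mathbb{R}^{m\times m}$ be symmetric positive semidefinite and $A\in\mathbb{R}^{m\times n}$. Let $l$ be an index and $\mathcal{B},\mathcal{N}$ index sets such that $\mathcal{B}$, $\{l\}$, $\mathcal{N}$ are pairwise disjoint with union $\{1,\dots,n\}$. Consider vectors $(\Delta x,\Delta y,\Delta z)\in\mathbb{R}^n\times\mathbb{R}^m\times\mathbb{R}^n$ satisfying \[ H\Delta x-A^T\Delta y-\Delta z=0,\quad A\Delta x+M\Delta y=0,\quad \Delta x_{\mathcal{N}}=0,\quad \Delta z_{\mathcal{B}}=0. \tag{$*$} \] Assume $K_l$ is nonsingular and let $\Delta z_l$ be a given nonnegative scalar. 1. If $\Delta z_l=0$, then the only solution of $( * )$ with this value of $\Delta z_l$ is zero, i.e., $\Delta x_l=0$, $\Delta x_{\mathcal{B}}=0$, $\Delta y=0$, $\Delta z_{\mathcal{N}}=0$. 2. If $\Delta z_l>0$, then the quantities $\Delta x_l,\Delta x_{\mathcal{B}},\Delta y,\Delta z_{\mathcal{N}}$ of a solution of $( * )$ with this value of $\Delta z_l$ are unique and satisfy \[ K_l\begin{pmatrix}\Delta x_l\\ \Delta x_{\mathcal{B}}\\ -\Delta y\end{pmatrix}=\begin{pmatrix}1\\0\\0\end{pmatrix}\Delta z_l,\qquad \Delta z_{\mathcal{N}}=h_{\mathcal{N}l}\Delta x_l+H_{\mathcal{B}\mathcal{N}}^T\Delta x_{\mathcal{B}}-A_{\mathcal{N}}^T\Delta y. \] Moreover, either (i)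 $K_{\mathcal{B}}$ is nonsingular and $\Delta x_l>0$, or (ii) $K_{\mathcal{B}}$ is singular and $\Delta x_l=0$, in which case $\Delta x_{\mathcal{B}}=0$ and the zero eigenvalue of $K_{\mathcal{B}}$ has multiplicity one with corresponding eigenvector $(0,\Delta y)$.
   Context: For index sets $S,T$: $w_S$ is the subvector of $w$ indexed by $S$; $H_{ST}$ is the submatrix of $H$ with rows in $S$ and columns in $T$; $A_S$ is the matrix of columns of $A$ indexed by $S$; $a_l$ is the $l$th column of $A$; $h_{ll}$ is the $l$th diagonal entry of $H$; $h_{Sl}$ is the column vector of entries $h_{il}$, $i\in S$. Define \[ K_{\mathcal{B}}=\begin{pmatrix}H_{\mathcal{B}\mathcal{B}}&A_{\mathcal{B}}^T\\ A_{\mathcal{B}}&-M\end{pmatrix},\qquad K_l=\begin{pmatrix}h_{ll}&h_{\mathcal{B}l}^T&a_l^T\\ h_{\mathcal{B}l}&H_{\mathcal{B}\mathcal{B}}&A_{\mathcal{B}}^T\\ a_l&A_{\mathcal{B}}&-M\end{pmatrix}. \] *)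

(* Defs.v *)
From HB Require Import structures.
From mathcomp Require Import all_boot all_order all_algebra.
Set Implicit Arguments. Unset Strict Implicit. Unset Printing Implicit Defensive.
Import Order.TTheory GRing.Theory Num.Theory.
Local Open Scope ring_scope.

Section Defs.
Variable R : realFieldType.

Definition sym_psd (n : nat) (H : 'M[R]_n) : Prop :=
  H^T = H /\ forall v : 'cV[R]_n, 0 <= (v^T *m H *m v) 0 0.

(* Index sets S are finite sets of 'I_n, enumerated increasingly via enum_val. *)
Definition subv (n : nat) (S : {set 'I_n}) (w : 'cV[R]_n) : 'cV[R]_#|S| :=
  \col_(i < #|S|) w (enum_val i) 0.
Definition subm (n : nat) (S T : {set 'I_n}) (H : 'M[R]_n) : 'M[R]_(#|S|, #|T|) :=
  \matrix_(i < #|S|, j < #|T|) H (enum_val i) (enum_val j).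
Definition subcols (m n : nat) (S : {set 'I_n}) (A : 'M[R]_(m, n)) : 'M[R]_(m, #|S|) :=
  \matrix_(i < m, j < #|S|) A i (enum_val j).
Definition subcol (n : nat) (S : {set 'I_n}) (l : 'I_n) (H : 'M[R]_n) : 'cV[R]_#|S| :=
  \col_(i < #|S|) H (enum_val i) l.

Definition KB (n m : nat) (H : 'M[R]_n) (A : 'M[R]_(m, n)) (M : 'M[R]_m)
  (B : {set 'I_n}) : 'M[R]_(#|B| + m) :=
  block_mx (subm B B H) (subcols B A)^T (subcols B A) (- M).

Definition Kl (n m : nat) (H : 'M[R]_n) (A : 'M[R]_(m, n)) (M : 'M[R]_m)
  (B : {set 'I_n}) (l : 'I_n) : 'M[R]_(1 + (#|B| + m)) :=
  block_mx (H l l)%:M (row_mx (subcol B l H)^T (col l A)^T)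
           (col_mx (subcol B l H) (col l A)) (KB H A M B).

Definition sys (n m : nat) (H : 'M[R]_n) (A : 'M[R]_(m, n)) (M : 'M[R]_m)
  (B N : {set 'I_n}) (dx : 'cV[R]_n) (dy : 'cV[R]_m) (dz : 'cV[R]_n) : Prop :=
  [/\ H *m dx - A^T *m dy - dz = 0,
      A *m dx + M *m dy = 0,
      (forall i, i \in N -> dx i 0 = 0) &
      (forall i, i \in B -> dz i 0 = 0)].

End Defs.

(* Main.v *)
Require Import Defs.
From HB Require Import structures.
From mathcomp Require Import all_boot all_order all_algebra.
From mathcomp Require Import ring lra.
Set Implicit Arguments. Unset Strict Implicit. Unset Printing Implicit Defensive.
Import Order.TTheory GRing.Theory Num.Theory.
Local Open Scope ring_scope.

Section Sel.
Variable R : realFieldType.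
Variable n : nat.

Definition Esel (S : {set 'I_n}) : 'M[R]_(n, #|S|) :=
  \matrix_(i < n, j < #|S|) (i == enum_val j)%:R.
Definition el (l : 'I_n) : 'cV[R]_n := delta_mx l 0.

Lemma EselTmul S k (w : 'M[R]_(n,k)) : (Esel S)^T *m w = \matrix_(j, c) w (enum_val j) c.
Proof.
apply/matrixP=> j c; rewrite !mxE (bigD1 (enum_val j)) //= big1 ?addr0.
  by rewrite !mxE eqxx mul1r.
by move=> i /negPf ne; rewrite !mxE ne mul0r.
Qed.

Lemma subvE S (w : 'cV[R]_n) : subv S w = (Esel S)^T *m w.
Proof. by rewrite EselTmul; apply/matrixP=> i j; rewrite !mxE ord1. Qed.

Lemma mulEsel S k (A : 'M[R]_(k, n)) : A *m Esel S = \matrix_(c, j) A c (enum_val j).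
Proof.
apply/matrixP=> c j; rewrite !mxE (bigD1 (enum_val j)) //= big1 ?addr0.
  by rewrite !mxE eqxx mulr1.
by move=> i /negPf ne; rewrite !mxE ne mulr0.
Qed.

Lemma subcolsE m S (A : 'M[R]_(m, n)) : subcols S A = A *m Esel S.
Proof. by rewrite mulEsel; apply/matrixP=> i j; rewrite !mxE. Qed.

Lemma submE S T (H : 'M[R]_n) : subm S T H = (Esel S)^T *m H *m Esel T.
Proof. by rewrite EselTmul mulEsel; apply/matrixP=> i j; rewrite !mxE. Qed.

Lemma subcolE S l (H : 'M[R]_n) : subcol S l H = (Esel S)^T *m H *m el l.
Proof. by rewrite -mulmxA -colE EselTmul; apply/matrixP=> i j; rewrite !mxE. Qed.

Lemma colEl m l (A : 'M[R]_(m, n)) : col l A = A *m el l.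
Proof. exact: colE. Qed.

Lemma elTmul k l (w : 'M[R]_(n, k)) : (el l)^T *m w = row l w.
Proof. by rewrite trmx_delta -rowE. Qed.

Lemma scal_el l (x : 'cV[R]_n) : (x l 0)%:M = (el l)^T *m x.
Proof. by rewrite elTmul (mx11_scalar (row l x)) mxE. Qed.

Lemma hll_el l (H : 'M[R]_n) : (H l l)%:M = (el l)^T *m H *m el l.
Proof. by rewrite elTmul -colE (mx11_scalar (col l (row l H))) !mxE. Qed.

Lemma EselTE S : (Esel S)^T *m Esel S = 1%:M.
Proof.
rewrite EselTmul; apply/matrixP=> i j; rewrite !mxE.
by rewrite (inj_eq enum_val_inj).
Qed.

Lemma EselTel (S : {set 'I_n}) (l : 'I_n) : l \notin S -> (Esel S)^T *m el l = 0.
Proof.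
move=> lS; rewrite EselTmul; apply/matrixP=> i j; rewrite !mxE.
case: eqP => // E; move: lS; rewrite -E enum_valP //.
Qed.

Lemma Esel_proj S (x : 'cV[R]_n) :
  Esel S *m ((Esel S)^T *m x) = \col_i (if i \in S then x i 0 else 0).
Proof.
rewrite EselTmul; apply/matrixP=> i c; rewrite ord1 !mxE.
case: ifP => iS.
  rewrite (bigD1 (enum_rank_in iS i)) //= big1 ?addr0.
    by rewrite !mxE enum_rankK_in // eqxx mul1r.
  move=> j ne; rewrite !mxE; case: eqP => [E|_]; last by rewrite mul0r.
  by case/eqP: ne; apply: enum_val_inj; rewrite -E enum_rankK_in.
rewrite big1 // => j _; rewrite !mxE; case: eqP => [E|_]; last by rewrite mul0r.
by move: iS; rewrite E enum_valP.
Qed.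

Lemma el_proj l (x : 'cV[R]_n) :
  el l *m ((el l)^T *m x) = \col_i (if i == l then x l 0 else 0).
Proof.
rewrite -scal_el mul_mx_scalar; apply/matrixP=> i c; rewrite ord1 !mxE.
by case: eqP => _; rewrite ?mulr1 ?mulr0.
Qed.

End Sel.
Arguments el {R n}.
Arguments Esel {R n}.
Section Gen.
Variable R : realFieldType.

Lemma unit_ker k (K : 'M[R]_k) (z : 'cV[R]_k) : K \in unitmx -> K *m z = 0 -> z = 0.
Proof. by move=> uK Kz; rewrite -(mulKmx uK z) Kz mulmx0. Qed.

Lemma nonunit_ker k (K : 'M[R]_k) : K \notin unitmx ->
  exists2 z : 'cV[R]_k, z != 0 & K *m z = 0.
Proof.
rewrite unitmxE unitfE negbK -det_tr => /det0P [v nz vK].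
exists v^T; first by rewrite -(inj_eq (@trmx_inj _ _ _)) trmxK trmx0.
by rewrite -(trmxK K) -trmx_mul vK trmx0.
Qed.

Lemma ker_unit k (K : 'M[R]_k) : (forall z : 'cV[R]_k, K *m z = 0 -> z = 0) ->
  K \in unitmx.
Proof.
move=> h; apply/negPn/negP => /nonunit_ker [z nz Kz].
by move/eqP: nz; apply; apply: h.
Qed.

Lemma psd_zero k (K : 'M[R]_k) (x : 'cV[R]_k) : sym_psd K ->
  (x^T *m K *m x) 0 0 = 0 -> K *m x = 0.
Proof.
move=> [KT Kp] q0.
have key : forall y : 'cV[R]_k, (y^T *m K *m x) 0 0 = 0.
  move=> y.
  set b := (y^T *m K *m x) 0 0; set c := (y^T *m K *m y) 0 0.
  have bsym : (x^T *m K *m y) 0 0 = b.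
    have E (C : 'M[R]_1) : C 0 0 = C^T 0 0 by rewrite mxE.
    rewrite /b E.
    by rewrite trmx_mul trmx_mul trmxK KT mulmxA.
  have ex t : (x + t *: y)^T *m K *m (x + t *: y) = 
     x^T *m K *m x + t *: (x^T *m K *m y) + t *: (y^T *m K *m x) + (t * t) *: (y^T *m K *m y).
    have -> : (x + t *: y)^T = x^T + t *: y^T by apply/matrixP => i j; rewrite !mxE.
    rewrite !mulmxDl !mulmxDr -!scalemxAl -!scalemxAr.
    by rewrite scalerA !addrA; congr (_ + _); rewrite -!addrA; congr (_ + _); rewrite addrC.
  have c0 : 0 <= c by apply: Kp.
  set t := - b / (c + 1).
  have := Kp (x + t *: y); rewrite ex.
  have ent (a1 a2 a3 a4 : 'M[R]_1) s : (a1 + s *: a2 + s *: a3 + (s * s) *: a4) 0 0 =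
     a1 0 0 + s * a2 0 0 + s * a3 0 0 + s * s * a4 0 0 by rewrite !mxE.
  rewrite ent q0 bsym -/b -/c add0r.
  have c1 : 0 < c + 1 by rewrite ltr_wpDl.
  have ht : t * (c + 1) = - b by rewrite /t mulfVK // gt_eqF.
  move=> h.
  have h2 : 0 <= (t * b + t * b + t * t * c) * ((c + 1) * (c + 1)).
    by apply: mulr_ge0 => //; rewrite mulr_ge0 // ltW.
  have e : (t * b + t * b + t * t * c) * ((c + 1) * (c + 1)) = - (b * b) * (c + 2).
    have -> : (t * b + t * b + t * t * c) * ((c + 1) * (c + 1)) =
       (t * (c + 1)) * b * (c + 1) * 2 + (t * (c+1)) * (t * (c+1)) * c.
      by rewrite -mulr2n; ring.
    by rewrite ht; ring.
  rewrite e in h2.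
  have : b * b * (c + 2) <= 0 by rewrite -oppr_ge0 -mulNr.
  have c2 : 0 < c + 2 by rewrite ltr_wpDl.
  rewrite pmulr_lle0 // => bb.
  by apply/eqP; rewrite -sqrf_eq0 expr2 eq_le bb /= -expr2 sqr_ge0.
apply/matrixP=> i j; rewrite ord1 [RHS]mxE.
have := key (delta_mx i 0); rewrite trmx_delta -mulmxA -rowE mxE => ->.
by [].
Qed.

End Gen.
Section Mup.
Variable R : realFieldType.

Lemma col_mulmx k p q (C : 'M[R]_(k, p)) (D : 'M[R]_(p, q)) j : col j (C *m D) = C *m col j D.
Proof. by rewrite !colE mulmxA. Qed.

Lemma entZ p q (X : 'M[R]_(p, q)) a i j : (a *: X) i j = a * X i j.
Proof. by rewrite mxE. Qed.
Lemma entD p q (X Y : 'M[R]_(p, q)) i j : (X + Y) i j = X i j + Y i j.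
Proof. by rewrite mxE. Qed.
Lemma entN p q (X : 'M[R]_(p, q)) i j : (- X) i j = - X i j.
Proof. by rewrite mxE. Qed.
Lemma entT (X : 'M[R]_1) : X^T 0 0 = X 0 0.
Proof. by rewrite mxE. Qed.
Lemma ent0 p q i j : (0 : 'M[R]_(p, q)) i j = 0.
Proof. by rewrite mxE. Qed.

Lemma sqnorm_pos k (v : 'cV[R]_k) k0 : v k0 0 != 0 -> 0 < (v^T *m v) 0 0.
Proof.
move=> hk0; rewrite mxE (bigD1 k0) //= mxE.
apply: ltr_pwDl; first by rewrite lt_def mulf_neq0 //= -expr2 sqr_ge0.
by apply: sumr_ge0 => i _; rewrite mxE -expr2 sqr_ge0.
Qed.

Lemma mup_one k (K : 'M[R]_k) (v : 'cV[R]_k) : K^T = K -> v != 0 -> K *m v = 0 ->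
  (forall w, K *m w = 0 -> exists t, w = t *: v) -> mup 0 (char_poly K) = 1%N.
Proof.
move=> KT nzv Kv kerK.
have [k0 hk0] : exists k0, v k0 0 != 0.
  apply/existsP; apply: contraNT nzv; rewrite negb_exists => /forallP h.
  by apply/eqP/matrixP=> i j; rewrite ord1 mxE; move: (h i); rewrite negbK => /eqP.
pose P : 'M[R]_k := \matrix_(i, j) (if j == k0 then v i 0 else (i == j)%:R).
pose C := char_poly_mx K.
pose Q : 'M[{poly R}]_k := \matrix_(i, j) (if j == k0 then (v i 0)%:P else C i j).
pose d : 'rV[{poly R}]_k := \row_j (if j == k0 then 'X else 1).
have eQ : C *m map_mx polyC P = Q *m diag_mx d.
  rewrite mul_mx_diag; apply/matrixP=> i j.
  have -> : (C *m map_mx polyC P) i j = col j (C *m map_mx polyC P) i 0 by rewrite [RHS]mxE.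
  rewrite colE -mulmxA -colE [RHS]mxE [Q i j]mxE [d 0 j]mxE; case: eqP => [->|ne].
    have -> : col k0 (map_mx polyC P) = map_mx polyC v.
      by apply/matrixP=> a b; rewrite ord1 !mxE eqxx.
    rewrite /C /char_poly_mx mulmxBl mul_scalar_mx -map_mxM Kv map_mx0 subr0 !mxE.
    by rewrite mulrC.
  have -> : col j (map_mx polyC P) = delta_mx j 0.
    apply/matrixP=> a b; rewrite ord1 !mxE; case: eqP => // _.
    by rewrite eq_sym; case: (j == a).
  by rewrite -colE mxE mulr1.
have detP : \det P != 0.
  rewrite -unitfE -unitmxE; apply: ker_unit => z Pz.
  have ePz i : (P *m z) i 0 = v i 0 * z k0 0 + (if i == k0 then 0 else z i 0).
    rewrite mxE (bigD1 k0) //= mxE eqxx; congr (_ + _).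
    case: eqP => [->|ne].
      by apply: big1 => j /negPf jn; rewrite mxE jn eq_sym jn mul0r.
    rewrite (bigD1 i) /=; last by apply/eqP.
    rewrite mxE (introF eqP ne) eqxx mul1r big1 ?addr0 // => j /andP [jn ji].
    by rewrite mxE (negPf jn) eq_sym (negPf ji) mul0r.
  have zk0 : z k0 0 = 0.
    move: (ePz k0); rewrite Pz eqxx addr0 mxE => /esym /eqP.
    by rewrite mulf_eq0 (negPf hk0) => /eqP.
  apply/matrixP=> i j; rewrite ord1 mxE; move: (ePz i).
  rewrite Pz zk0 mulr0 add0r mxE; case: eqP => [->|_] //.
have detQ : (\det Q).[0] != 0.
  rewrite -horner_evalE -det_map_mx.
  set L := map_mx _ Q.
  rewrite -unitfE -unitmxE; apply: ker_unit => z Lz.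
  pose z' : 'cV[R]_k := \col_i (if i == k0 then 0 else z i 0).
  have eLz : L *m z = z k0 0 *: v - K *m z'.
    apply/matrixP=> i c; rewrite ord1 !mxE (bigD1 k0) //= [X in _ = _ - X](bigD1 k0) //=.
    have -> : L i k0 = v i 0 by rewrite /L !mxE eqxx /= horner_evalE hornerC.
    have -> : z' k0 0 = 0 by rewrite /z' mxE eqxx.
    rewrite mulr0 add0r mulrC; congr (_ + _).
    rewrite -sumrN; apply: eq_bigr => j /negPf jn.
    rewrite /L /z' !mxE jn /= horner_evalE.
    by rewrite hornerD hornerN hornerMn hornerX hornerC mul0rn sub0r mulNr.
  move: Lz; rewrite eLz => /eqP; rewrite subr_eq0 => /eqP e1.
  have vK : v^T *m K = 0 by rewrite -{1}KT -trmx_mul Kv trmx0.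
  have zk0 : z k0 0 = 0.
    have := congr1 (fun X => (v^T *m X) 0 0) e1 => /=.
    rewrite mulmxA vK mul0mx -scalemxAr entZ ent0 => /eqP.
    rewrite mulf_eq0 (gt_eqF (sqnorm_pos hk0)) orbF => /eqP //.
  move: e1; rewrite zk0 scale0r => /esym Kz'.
  have [t ht] := kerK _ Kz'.
  have t0 : t = 0.
    have := congr1 (fun X : 'cV[R]_k => X k0 0) ht => /=; rewrite !mxE eqxx => /esym /eqP.
    by rewrite mulf_eq0 (negPf hk0) orbF => /eqP.
  move: ht; rewrite t0 scale0r => z'0.
  apply/matrixP=> i j; rewrite ord1 mxE; case: (eqVneq i k0) => [->//|ne].
  by have := congr1 (fun X : 'cV[R]_k => X i 0) z'0 => /=; rewrite !mxE (negPf ne).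
have := congr1 determinant eQ.
rewrite !det_mulmx det_map_mx det_diag (bigD1 k0) //= big1; last first.
  by move=> j /negPf jn; rewrite mxE jn.
rewrite mxE eqxx mulr1 => e.
have : mup 0 (\det C * (\det P)%:P) = mup 0 (\det Q * 'X) by rewrite e.
rewrite mupMl; last by rewrite rootC.
rewrite mupMr //.
have -> : ('X : {poly R}) = ('X - (0:R)%:P) ^+ 1 by rewrite expr1 subr0.
by rewrite mup_XsubCX eqxx.
Qed.
End Mup.
Section Main.
Variable R : realFieldType.
Variables (n m : nat) (H : 'M[R]_n) (M : 'M[R]_m) (A : 'M[R]_(m, n)).
Variables (l : 'I_n) (B N : {set 'I_n}).
Hypothesis HT : H^T = H.
Hypothesis MT : M^T = M.
Hypothesis lB : l \notin B.
Hypothesis lN : l \notin N.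
Hypothesis BN : [disjoint B & N].
Hypothesis U : B :|: [set l] :|: N = [set: 'I_n].

Lemma decomp (x : 'cV[R]_n) : (forall i, i \in N -> x i 0 = 0) ->
  x = el l *m ((el l)^T *m x) + Esel B *m ((Esel B)^T *m x).
Proof.
move=> xN; rewrite el_proj Esel_proj; apply/matrixP=> i c; rewrite ord1 !mxE.
have : i \in B :|: [set l] :|: N by rewrite U inE.
rewrite !inE; case: eqP => [->|il]; first by rewrite (negPf lB) addr0.
by rewrite add0r orbF; case: ifP => // _ /xN ->.
Qed.

Lemma Kl_u (x : 'cV[R]_n) (y : 'cV[R]_m) : (forall i, i \in N -> x i 0 = 0) ->
  Kl H A M B l *m col_mx (x l 0)%:M (col_mx (subv B x) (- y)) =
  col_mx ((el l)^T *m (H *m x - A^T *m y))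
    (col_mx ((Esel B)^T *m (H *m x - A^T *m y)) (A *m x + M *m y)).
Proof.
move=> xN; rewrite /Kl /KB mul_block_col mul_row_col mul_block_col.
rewrite subvE submE subcolsE subcolE colEl hll_el scal_el.
rewrite !trmx_mul HT.
rewrite [in RHS](decomp xN).
rewrite !mulmxDr !mulmxN !mulmxA.
by rewrite trmxK !mul_col_mx add_col_mx mulNmx opprK !addrA.
Qed.


Lemma subvN_expr (x : 'cV[R]_n) (y : 'cV[R]_m) : (forall i, i \in N -> x i 0 = 0) ->
  subv N (H *m x - A^T *m y) = subcol N l H *m (x l 0)%:M
    + (subm B N H)^T *m subv B x - (subcols N A)^T *m y.
Proof.
move=> xN; rewrite !subvE subcolE submE subcolsE scal_el !trmx_mul HT trmxK.
rewrite [in LHS](decomp xN) !mulmxDr !mulmxN !mulmxA.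
by [].
Qed.

Lemma sys_Kl dx dy dz : sys H A M B N dx dy dz ->
  Kl H A M B l *m col_mx (dx l 0)%:M (col_mx (subv B dx) (- dy)) = col_mx (dz l 0)%:M 0.
Proof.
case=> e1 e2 hN hB; rewrite Kl_u //.
have -> : H *m dx - A^T *m dy = dz by apply/eqP; rewrite -subr_eq0 e1.
rewrite -scal_el e2 -subvE.
have -> : subv B dz = 0 by apply/matrixP=> i j; rewrite !mxE hB // enum_valP.
by rewrite col_mx0.
Qed.

Lemma sys_dzN dx dy dz : sys H A M B N dx dy dz ->
  subv N dz = subcol N l H *m (dx l 0)%:M
    + (subm B N H)^T *m subv B dx - (subcols N A)^T *m dy.
Proof.
case=> e1 e2 hN hB; rewrite -subvN_expr //.
have -> : H *m dx - A^T *m dy = dz by apply/eqP; rewrite -subr_eq0 e1.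
by [].
Qed.

Lemma sys_nonneg dx dy dz : sym_psd H -> sym_psd M -> sys H A M B N dx dy dz ->
  0 <= dx l 0 * dz l 0.
Proof.
move=> [_ pH] [_ pM] [e1 e2 hN hB].
have E1 : (dx^T *m dz) 0 0 = dx l 0 * dz l 0.
  rewrite mxE (bigD1 l) //= big1 ?addr0; first by rewrite mxE.
  move=> i il; rewrite mxE.
  have : i \in B :|: [set l] :|: N by rewrite U inE.
  rewrite !inE (negPf il) orbF => /orP [iB|iN]; first by rewrite hB // mulr0.
  by rewrite hN // mul0r.
have dzE : dz = H *m dx - A^T *m dy by apply/eqP; rewrite eq_sym -subr_eq0 e1.
have Adx : A *m dx = - (M *m dy) by apply/eqP; rewrite -addr_eq0 e2.
have E2 : dx^T *m dz = dx^T *m H *m dx + dy^T *m M *m dy.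
  rewrite dzE mulmxBr mulmxA mulmxA.
  have -> : dx^T *m A^T = (A *m dx)^T by rewrite trmx_mul.
  rewrite Adx.
  have -> : (- (M *m dy))^T = - (dy^T *m M) by rewrite -[in RHS]MT -trmx_mul; apply/matrixP=> i j; rewrite !mxE.
  by rewrite mulNmx opprK.
rewrite -E1 E2 mxE; apply: addr_ge0; [exact: pH | exact: pM].
Qed.

Lemma Kl_col0 (w : 'cV[R]_(#|B| + m)) :
  Kl H A M B l *m col_mx 0 w =
  col_mx (row_mx (subcol B l H)^T (col l A)^T *m w) (KB H A M B *m w).
Proof. by rewrite /Kl mul_block_col !mulmx0 !add0r. Qed.

Hypothesis psdH : sym_psd H.
Hypothesis psdM : sym_psd M.
Hypothesis uKl : Kl H A M B l \in unitmx.

Lemma KB_ker_p (p : 'cV[R]_#|B|) (q : 'cV[R]_m) :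
  KB H A M B *m col_mx p q = 0 -> p = 0 /\ (subcols B A)^T *m q = 0.
Proof.
rewrite /KB mul_block_col => /eqP; rewrite col_mx_eq0 => /andP [/eqP e1 /eqP e2].
have e2' : subcols B A *m p = M *m q.
  by apply/eqP; rewrite -subr_eq0 -mulNmx e2.
pose x := Esel B *m p.
have ex : x^T *m H *m x = p^T *m subm B B H *m p.
  by rewrite submE /x trmx_mul !mulmxA.
have s1 : (p^T *m subm B B H *m p) 0 0 + (p^T *m (subcols B A)^T *m q) 0 0 = 0.
  have := congr1 (fun X : 'cV[R]_#|B| => (p^T *m X) 0 0) e1 => /=.
  by rewrite mulmxDr !mulmxA mulmx0 entD ent0.
have s2 : (p^T *m (subcols B A)^T *m q) 0 0 = (q^T *m M *m q) 0 0.
  rewrite -trmx_mul -[LHS]entT (trmx_mul (_^T) q) trmxK e2' mulmxA.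
  by [].
have a0 : 0 <= (p^T *m subm B B H *m p) 0 0 by rewrite -ex; apply: psdH.2.
have c0 : 0 <= (q^T *m M *m q) 0 0 by apply: psdM.2.
have a00 : (x^T *m H *m x) 0 0 = 0 by rewrite ex; lra.
have c00 : (q^T *m M *m q) 0 0 = 0 by lra.
have Hx := psd_zero psdH a00.
have Mq := psd_zero psdM c00.
have ASp : subcols B A *m p = 0 by rewrite e2' Mq.
have K0 : Kl H A M B l *m col_mx 0 (col_mx p 0) = 0.
  rewrite Kl_col0 mul_row_col mulmx0 addr0 /KB mul_block_col !mulmx0 addr0 ASp addr0.
  have -> : (subcol B l H)^T *m p = 0.
    by rewrite subcolE !trmx_mul trmxK HT -!mulmxA -/x Hx mulmx0.
  have -> : subm B B H *m p = 0.
    by rewrite submE -!mulmxA -/x Hx mulmx0.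
  by rewrite !col_mx0.
have := unit_ker uKl K0 => /eqP; rewrite !col_mx_eq0 => /and3P [_ /eqP p0 _].
split => //; move: e1; rewrite p0 mulmx0 add0r //.
Qed.


Lemma sc0 : (0 : R)%:M = 0 :> 'M[R]_1.
Proof. by apply/matrixP=> i j; rewrite !mxE mul0rn. Qed.
Lemma sc_inj (a b : R) : a%:M = b%:M :> 'M[R]_1 -> a = b.
Proof. by move/(congr1 (fun X : 'M[R]_1 => X 0 0)); rewrite !mxE eqxx !mulr1n. Qed.
Lemma m11_neq0 (X : 'M[R]_1) : X != 0 -> X 0 0 != 0.
Proof. by apply: contraNneq => h; rewrite (mx11_scalar X) h sc0. Qed.

Lemma KB_sym : (KB H A M B)^T = KB H A M B.
Proof.
rewrite /KB tr_block_mx trmxK submE !trmx_mul trmxK HT !mulmxA.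
congr block_mx; apply/matrixP=> i j; rewrite !mxE; have := congr1 (fun X : 'M[R]_m => X i j) MT; by rewrite mxE => ->.
Qed.

Lemma Kl_sym : (Kl H A M B l)^T = Kl H A M B l.
Proof. by rewrite /Kl tr_block_mx tr_scalar_mx tr_col_mx tr_row_mx !trmxK KB_sym. Qed.

Lemma main_part dzl : 0 <= dzl ->
  (dzl = 0 ->
     forall dx dy dz, sys H A M B N dx dy dz -> dz l 0 = dzl ->
       [/\ dx l 0 = 0, subv B dx = 0, dy = 0 & subv N dz = 0])
  /\
  (0 < dzl ->
     (forall dx dy dz dx' dy' dz',
        sys H A M B N dx dy dz -> dz l 0 = dzl ->
        sys H A M B N dx' dy' dz' -> dz' l 0 = dzl ->
        [/\ dx l 0 = dx' l 0, subv B dx = subv B dx', dy = dy'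
          & subv N dz = subv N dz'])
     /\
     (forall dx dy dz, sys H A M B N dx dy dz -> dz l 0 = dzl ->
        [/\ Kl H A M B l *m col_mx (dx l 0)%:M (col_mx (subv B dx) (- dy))
              = col_mx (1%:M : 'cV[R]_1) 0 *m dzl%:M,
            subv N dz = subcol N l H *m (dx l 0)%:M
                        + (subm B N H)^T *m subv B dx
                        - (subcols N A)^T *m dy
          & (KB H A M B \in unitmx /\ 0 < dx l 0)
            \/ [/\ KB H A M B \notin unitmx, dx l 0 = 0, subv B dx = 0
                 & [/\ mup 0 (char_poly (KB H A M B)) = 1%N,
                        KB H A M B *m col_mx (0 : 'cV[R]_#|B|) dy = 0
                      & col_mx (0 : 'cV[R]_#|B|) dy != 0]]])).
Proof.
move=> dzl0; split.
  move=> -> dx dy dz hs hl.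
  have := sys_Kl hs; rewrite hl sc0 col_mx0 => /(unit_ker uKl) /eqP.
  rewrite !col_mx_eq0 oppr_eq0 => /and3P [/eqP a0 /eqP b0 /eqP c0].
  have dxl0 : dx l 0 = 0 by apply: sc_inj; rewrite a0 sc0.
  split => //; rewrite (sys_dzN hs) dxl0 sc0 b0 c0 !mulmx0 !addr0 subr0 //.
move=> dpos; split.
  move=> dx dy dz dx' dy' dz' hs hl hs' hl'.
  have := sys_Kl hs; have := sys_Kl hs'; rewrite hl hl' => e' e.
  have : Kl H A M B l *m (col_mx (dx l 0)%:M (col_mx (subv B dx) (- dy)) -
     col_mx (dx' l 0)%:M (col_mx (subv B dx') (- dy'))) = 0 by rewrite mulmxBr e e' subrr.
  move=> /(unit_ker uKl) /eqP; rewrite subr_eq0 => /eqP /eq_col_mx [/sc_inj a /eq_col_mx [b /oppr_inj c]].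
  by split => //; rewrite (sys_dzN hs) (sys_dzN hs') a b c.
move=> dx dy dz hs hl.
have e := sys_Kl hs; rewrite hl in e.
have eR : col_mx (1%:M : 'cV[R]_1) 0 *m dzl%:M = col_mx dzl%:M (0 : 'M[R]_(#|B| + m, 1)) by rewrite mul_col_mx mul1mx mul0mx.
split; first by rewrite e eR.
  exact: sys_dzN.
have nn := sys_nonneg psdH psdM hs; rewrite hl pmulr_lge0 // in nn.
have dzlM : (dzl%:M : 'M[R]_1) != 0.
  by apply/eqP => /(congr1 (fun X : 'M[R]_1 => X 0 0)); rewrite !mxE eqxx mulr1n => h; move: dpos; rewrite h ltxx.
case: (boolP (KB H A M B \in unitmx)) => uKB.
  left; split => //; rewrite lt_def nn andbT; apply/eqP => dxl0.
  move: e; rewrite dxl0 sc0 Kl_col0 => /eq_col_mx [e1 /(unit_ker uKB) w0].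
  by move/eqP: dzlM; apply; rewrite -e1 w0 mulmx0.
right.
set r := row_mx (subcol B l H)^T (col l A)^T.
have Klv (w : 'cV[R]_(#|B| + m)) : KB H A M B *m w = 0 -> w != 0 -> r *m w != 0.
  move=> Kw nzw; apply/eqP => rw; move/eqP: nzw; apply.
  have := Kl_col0 w; rewrite Kw rw col_mx0 => /(unit_ker uKl) /eqP.
  by rewrite col_mx_eq0 => /andP [_ /eqP].
have [z0 nz0 Kz0] := nonunit_ker uKB.
have cz : r *m z0 != 0 := Klv z0 Kz0 nz0.
have dxl0 : dx l 0 = 0.
  set u := col_mx (dx l 0)%:M (col_mx (subv B dx) (- dy)) in e.
  pose w0 : 'cV[R]_(1 + (#|B| + m)) := col_mx 0 z0.
  have E1 : w0^T *m (Kl H A M B l *m u) = 0.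
    by rewrite e tr_col_mx mul_row_col trmx0 mul0mx mulmx0 addr0.
  have E2 : w0^T *m (Kl H A M B l *m u) = (r *m z0)^T *m (dx l 0)%:M.
    rewrite mulmxA -{1}Kl_sym -trmx_mul Kl_col0 Kz0 tr_col_mx mul_row_col trmx0 mul0mx addr0.
    by [].
  move: E2; rewrite E1 mul_mx_scalar => /(congr1 (fun X : 'M[R]_1 => X 0 0)).
  rewrite entZ entT ent0 => /esym /eqP; rewrite mulf_eq0 (negPf (m11_neq0 cz)) orbF.
  by move/eqP.
move: e; rewrite dxl0 sc0 Kl_col0 => /eq_col_mx [e1 Ku].
have [dxB _] := KB_ker_p Ku.
have ev : col_mx (0 : 'cV[R]_#|B|) (- dy) = - col_mx 0 dy by rewrite opp_col_mx oppr0.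
have Kv : KB H A M B *m col_mx (0 : 'cV[R]_#|B|) dy = 0.
  by move: Ku; rewrite dxB ev mulmxN => /eqP; rewrite oppr_eq0 => /eqP.
have nzv : col_mx (0 : 'cV[R]_#|B|) dy != 0.
  apply/eqP => v0; move: e1; rewrite dxB ev v0 oppr0 mulmx0 => /esym /eqP.
  by rewrite (negPf dzlM).
split => //; split => //.
apply: (mup_one KB_sym nzv Kv) => w Kw.
have cv := Klv _ Kv nzv.
set v := col_mx (0 : 'cV[R]_#|B|) dy in cv Kv nzv *.
exists ((r *m w) 0 0 / (r *m v) 0 0).
set t := (r *m w) 0 0 / (r *m v) 0 0.
have Kw' : KB H A M B *m (w - t *: v) = 0 by rewrite mulmxBr -scalemxAr Kw Kv scaler0 subr0.
case: (eqVneq (w - t *: v) 0) => [/eqP|nz]; first by rewrite subr_eq0 => /eqP.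
have := Klv _ Kw' nz; rewrite mulmxBr -scalemxAr.
have -> : r *m w - t *: (r *m v) = 0.
  rewrite (mx11_scalar (r *m w - t *: (r *m v))) entD entN entZ /t divfK ?m11_neq0 //.
  by rewrite subrr sc0.
by rewrite eqxx.
Qed.

End Main.

Theorem proposition4 (R : realFieldType) (n m : nat)
  (H : 'M[R]_n) (M : 'M[R]_m) (A : 'M[R]_(m, n))
  (l : 'I_n) (B N : {set 'I_n}) :
  sym_psd H -> sym_psd M ->
  l \notin B -> l \notin N -> [disjoint B & N] ->
  B :|: [set l] :|: N = [set: 'I_n] ->
  Kl H A M B l \in unitmx ->
  forall dzl : R, 0 <= dzl ->
  (dzl = 0 ->
     forall dx dy dz, sys H A M B N dx dy dz -> dz l 0 = dzl ->
       [/\ dx l 0 = 0, subv B dx = 0, dy = 0 & subv N dz = 0])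
  /\
  (0 < dzl ->
     (forall dx dy dz dx' dy' dz',
        sys H A M B N dx dy dz -> dz l 0 = dzl ->
        sys H A M B N dx' dy' dz' -> dz' l 0 = dzl ->
        [/\ dx l 0 = dx' l 0, subv B dx = subv B dx', dy = dy'
          & subv N dz = subv N dz'])
     /\
     (forall dx dy dz, sys H A M B N dx dy dz -> dz l 0 = dzl ->
        [/\ Kl H A M B l *m col_mx (dx l 0)%:M (col_mx (subv B dx) (- dy))
              = col_mx (1%:M : 'cV[R]_1) 0 *m dzl%:M,
            subv N dz = subcol N l H *m (dx l 0)%:M
                        + (subm B N H)^T *m subv B dx
                        - (subcols N A)^T *m dy
          & (KB H A M B \in unitmx /\ 0 < dx l 0)
            \/ [/\ KB H A M B \notin unitmx, dx l 0 = 0, subv B dx = 0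
                 & [/\ mup 0 (char_poly (KB H A M B)) = 1%N,
                        KB H A M B *m col_mx (0 : 'cV[R]_#|B|) dy = 0
                      & col_mx (0 : 'cV[R]_#|B|) dy != 0]]])).
Proof.
move=> psdH psdM lB lN BN U uKl dzl dzl0.
apply: main_part => //; [exact: psdH.1 | exact: psdM.1].
Qed.
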